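(* Let $G$ be a group of order $16p$, where $p$ is an odd prime, let $P$ be a Sylow $p$-subgroup of $G$ and assume $P \trianglelefteq G$, and let $Q$ be a Sylow $2$-subgroup of $G$. Then $G = Q \ltimes P$. Moreover, if the commutator subgroup $G'$ is not a cyclic group of prime-power order (the trivial group counting as having prime-power order), then: $Q$ is nonabelian, $Q$ acts nontrivially on $P$ by conjugation, and $G' = Q' \times P$ is cyclic.
   Context: $G'=[G,G]$ denotes the commutator subgroup of $G$, and $Q'$ that of $Q$. *)

(* Defs.v *)
From mathcomp Require Import all_boot all_fingroup all_solvable.
Set Implicit Arguments.
Unset Strict Implicit.
Unset Printing Implicit Defensive.

(* Main.v *)
Require Import Defs.
From mathcomp Require Import all_boot all_fingroup all_solvable.
Set Implicit Arguments.
Unset Strict Implicit.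
Unset Printing Implicit Defensive.
Local Open Scope group_scope.
Lemma sq_noncyc4 (gT : finGroupType) (H : {group gT}) a :
  #|H| = 4%N -> ~~ cyclic H -> a \in H -> a ^+ 2 = 1.
Proof.
move=> cH ncH Ha; apply/eqP; rewrite -order_dvdn.
have d : #[a] %| 4 by rewrite -cH order_dvdG.
have ne4 : #[a] != 4%N.
  apply: contra ncH => /eqP oa; apply/cyclicP; exists a.
  apply/eqP; rewrite eq_sym eqEcard cycle_subG Ha /= cH -oa.
  by [].
move: (#[a]) d ne4 => n.
case: n => [|[|[|[|[|n]]]]] //.
Qed.

Lemma card4_eq (gT : finGroupType) (A B C : {group gT}) :
  #|C| = 4%N -> B \subset C -> A \proper B -> 1 < #|A| -> B :=: C.
Proof.
move=> cC sBC pAB gA.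
have d : #|B| %| 4 by rewrite -cC cardSg.
have lt : 2 < #|B| by apply: leq_trans (proper_card pAB).
have e : #|B| = 4%N.
  move: (#|B|) d lt => n; case: n => [|[|[|[|[|n]]]]] //.
by apply/eqP; rewrite eqEcard sBC cC e.
Qed.
Lemma der1_card16 (gT : finGroupType) (Q : {group gT}) :
  #|Q| = 16%N -> cyclic Q^`(1).
Proof.
move=> cQ.
have pQ : 2.-group Q by rewrite /pgroup cQ.
have nilQ := pgroup_nil pQ.
have [-> | ntQ'] := eqVneq Q^`(1) 1; first exact: cyclic1.
have nsQ'Q := der_normal 1 Q.
have [sQ'Q nQ'Q] := andP nsQ'Q.
have ncq : ~~ cyclic (Q / Q^`(1)).
  apply: contra ntQ' => cycq.
  have := cyclic_nilpotent_quo_der1_cyclic nilQ cycq.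
  by move=> /cyclic_abelian /derG1P ->.
have cardq : (#|Q^`(1)| * #|Q / Q^`(1)|)%N = 16%N.
  by rewrite card_quotient // Lagrange.
have pQ' : 2.-group Q^`(1) := pgroupS sQ'Q pQ.
have ltQ' : #|Q^`(1)| < 16.
  rewrite -cQ; apply: proper_card; apply: (@sol_der1_proper _ Q) => //.
    exact: nilpotent_sol.
  by rewrite -cardG_gt1 cQ.
have [k ck] : exists k, #|Q^`(1)| = (2 ^ k)%N.
  by exists (logn 2 #|Q^`(1)|); exact: card_pgroup pQ'.
have k4 : k < 4 by rewrite -(ltn_exp2l _ _ (isT : 1 < 2)) -ck.
case: k ck k4 => [|[|[|[|k]]]] ck // _.
- by rewrite -cardG_gt1 ck in ntQ'.
- by rewrite prime_cyclic // ck.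
2: { have cq : #|Q / Q^`(1)| = 2%N.
    by apply/eqP; rewrite -(eqn_pmul2l (cardG_gt0 Q^`(1))) cardq ck.
  by rewrite prime_cyclic ?cq in ncq. }
have cq : #|Q / Q^`(1)| = 4%N.
  by apply/eqP; rewrite -(eqn_pmul2l (cardG_gt0 Q^`(1))) cardq ck.
rewrite /= in ck.
case: (boolP (cyclic Q^`(1))) => // ncQ'.
have ex2 : forall a, a \in Q^`(1) -> a ^+ 2 = 1 := fun a => sq_noncyc4 ck ncQ'.
have sqQ : forall x, x \in Q -> x ^+ 2 \in Q^`(1).
  move=> x Qx; have Nx := subsetP nQ'Q x Qx.
  apply: coset_idr; first by rewrite groupX.
  by rewrite morphX //; apply: sq_noncyc4 cq ncq _; rewrite mem_quotient.
have abQ' : abelian Q^`(1) by apply: (card_p2group_abelian (p:=2)).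
have [z /setIP[Q'z Zz] ntz] := trivgPn _ (meet_center_nil nilQ nsQ'Q ntQ').
have key : forall x y, x \in Q -> y \in Q -> commute [~ x, y] x.
  move=> x y Qx Qy.
  have Q'c : [~ x, y] \in Q^`(1) by rewrite derg1 mem_commg.
  case: (boolP (x ^+ 2 \in 'Z(Q))) => Zx2.
    have : [~ x * x, y] = 1.
      apply/eqP/commgP; move/setIP: Zx2 => [_ /centP cx2].
      by have := cx2 y Qy; rewrite expgS expg1.
    rewrite commMgJ => /mulg1_eq e1.
    have : [~ x, y] * [~ x, y] = 1 by have := ex2 _ Q'c; rewrite expgS expg1.
    move=> /mulg1_eq e2; apply/commgP/conjg_fixP.
    by apply: invg_inj; rewrite e1 e2.
  have cz : commute z x by move/setIP: Zz => [_ /centP]; apply.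
  have x2F : x ^+ 2 \in 'C_(Q^`(1))[x].
    by rewrite inE sqQ //; apply/cent1P; apply: commute_sym; apply: commuteX.
  have zF : z \in 'C_(Q^`(1))[x] by rewrite inE Q'z; apply/cent1P.
  have eF : 'C_(Q^`(1))[x] :=: Q^`(1).
    apply: (@card4_eq _ <[z]>) => //; first exact: subsetIl.
      apply/properP; split; first by rewrite cycle_subG.
      exists (x ^+ 2) => //; apply: contra Zx2.
      by apply: subsetP; rewrite cycle_subG.
    by rewrite -orderE order_gt1.
  have : [~ x, y] \in 'C_(Q^`(1))[x] by rewrite eF.
  by move/setIP=> [_ /cent1P].
have ntq : (Q / Q^`(1)) != 1 by rewrite -cardG_gt1 cq.
have [X qX ntX] := trivgPn _ ntq.
have : ~~ (Q / Q^`(1) \subset <[X]>).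
  apply: contra ncq => sqX; apply/cyclicP; exists X.
  by apply/eqP; rewrite eqEsubset sqX cycle_subG qX.
case/subsetPn => Y qY nXY.
case/morphimP: qX => x Nx Qx defX.
case/morphimP: qY => y Ny Qy defY.
have sKQ : <[x]> <*> <[y]> \subset Q by rewrite join_subG !cycle_subG Qx Qy.
have eK : (<[x]> <*> <[y]>)%G :=: Q.
  have eQ : 'Phi(Q) <*> (<[x]> <*> <[y]>) = Q.
    apply/eqP; rewrite eqEsubset join_subG Phi_sub sKQ /=.
    have sQ'L : Q^`(1) \subset 'Phi(Q) <*> (<[x]> <*> <[y]>).
      rewrite (Phi_joing pQ).
      exact: subset_trans (joing_subl _ _) (joing_subl _ _).
    rewrite -(quotientSGK nQ'Q sQ'L).
    have xL : x \in 'Phi(Q) <*> (<[x]> <*> <[y]>).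
      apply: (subsetP (joing_subr 'Phi(Q) _)); apply: (subsetP (joing_subl _ <[y]>)).
      exact: cycle_id.
    have yL : y \in 'Phi(Q) <*> (<[x]> <*> <[y]>).
      apply: (subsetP (joing_subr 'Phi(Q) _)); apply: (subsetP (joing_subr <[x]> _)).
      exact: cycle_id.
    have <- := @card4_eq _ <[X]> (('Phi(Q) <*> (<[x]> <*> <[y]>)) / Q^`(1))%G _ cq.
    - by [].
    - by apply: quotientS; rewrite join_subG Phi_sub.
    - apply/properP; split; first by rewrite cycle_subG defX mem_quotient.
      by exists Y => //; rewrite defY mem_quotient.
    by rewrite -orderE order_gt1.
  by rewrite -[RHS](Phi_nongen eQ) genGid.
have cK : [~ x, y] \in 'C(<[x]> <*> <[y]>).
  rewrite centY !cent_cycle inE; apply/andP; split; apply/cent1P.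
    exact: key.
  rewrite -invg_comm; apply: commute_sym; apply: commuteV; apply: commute_sym; exact: key.
have := der1_joing_cycles cK; rewrite /= eK => e.
by rewrite e cycle_cyclic in ncQ'.
Qed.
Theorem mainTheorem11 (gT : finGroupType) (G P Q : {group gT}) (p : nat) :
  prime p -> odd p -> #|G| = (16 * p)%N ->
  P \in 'Syl_p(G) -> P <| G -> Q \in 'Syl_2(G) ->
  P ><| Q = G /\
  (~ (cyclic G^`(1) /\ exists q : nat, prime q /\ q.-group G^`(1)) ->
     [/\ ~~ abelian Q, ~~ (Q \subset 'C(P)),
         Q^`(1) \x P = G^`(1) & cyclic G^`(1)]).
Proof.
move=> pr_p odd_p cG; rewrite !inE => sylP nsPG sylQ.
have [sPG nPG] := andP nsPG.
have sQG := pHall_sub sylQ.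
have p0 : 0 < p by apply: prime_gt0.
have cop16 : coprime p 16 by rewrite -[16%N]/(2 ^ 4)%N coprime_pexpr // coprimen2.
have cP : #|P| = p.
  rewrite (card_Hall sylP) cG partnM // part_p'nat ?part_pnat_id ?pnat_id //.
  by rewrite mul1n. by rewrite p'natE // -prime_coprime.
have cQ : #|Q| = 16%N.
  rewrite (card_Hall sylQ) cG partnM // part_pnat_id // part_p'nat ?muln1 //.
  by rewrite p'natE // dvdn2 odd_p.
have tiPQ : P :&: Q = 1 by apply: coprime_TIg; rewrite cP cQ.
have nPQ : Q \subset 'N(P) := subset_trans sQG nPG.
have defG : P * Q = G.
  apply/eqP; rewrite eqEcard mul_subG //= TI_cardMg // cP cQ cG mulnC.
  by [].
have sdG : P ><| Q = G by rewrite sdprodE.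
split=> // Hnot.
have cycQ' := der1_card16 cQ.
have cycP : cyclic P by apply: prime_cyclic; rewrite cP.
have sG'C : G^`(1) \subset 'C(P).
  rewrite -(ker_conj_aut P) ker_trivg_morphim (subset_trans (der_sub 1 G) nPG) /=.
  rewrite morphim_der //.
  have /derG1P -> : abelian (conj_aut P @* G).
    exact: abelianS (Aut_conj_aut _ _) (Aut_cyclic_abelian cycP).
  by [].
have sQ'C : Q^`(1) \subset 'C(P) := subset_trans (dergS 1 sQG) sG'C.
have tiQ'P : Q^`(1) :&: P = 1.
  by apply/trivgP; rewrite -tiPQ setIC; apply: setSI; exact: der_sub.
have dM : Q^`(1) \x P = Q^`(1) <*> P.
  by apply: dprodEY => //; rewrite centsC.
have cop : coprime #|Q^`(1)| #|P|.
  apply: (@coprime_dvdl _ 16); first by rewrite -cQ cardSg // der_sub.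
  by rewrite coprime_sym cP.
have cycM : cyclic (Q^`(1) <*> P) by rewrite (cyclic_dprod dM cycQ' cycP).
have nQ'G : G \subset 'N(Q^`(1)).
  rewrite -defG mul_subG //; first by apply: cents_norm; rewrite centsC.
  exact: normal_norm (der_normal 1 Q).
have nMG : G \subset 'N(Q^`(1) <*> P) by rewrite normsY.
have sG'M : G^`(1) \subset Q^`(1) <*> P.
  apply: der1_min => //.
  rewrite -defG quotientMl ?(subset_trans sPG) // quotientS1 ?joing_subr //.
  rewrite mul1g; apply: sub_der1_abelian; exact: joing_subl.
have cycG' : cyclic G^`(1) := cyclicS sG'M cycM.
have ncQP : ~~ (Q \subset 'C(P)).
  apply/negP => cQP; apply: Hnot; split => //; exists 2; split => //.
  apply: pgroupS (pHall_pgroup sylQ).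
  apply: der1_min; last by rewrite -defG quotientMidr quotient_abelian // cyclic_abelian.
  rewrite -defG mul_subG //; first by apply: cents_norm; rewrite centsC.
have ncabQ : ~~ abelian Q.
  apply/negP => /derG1P abQ; apply: Hnot; split => //; exists p; split => //.
  apply: pgroupS (pHall_pgroup sylP).
  by move: sG'M; rewrite abQ joing1G.
have sPG' : P \subset G^`(1).
  have sR : [~: P, Q] \subset G^`(1) by rewrite derg1 commgSS.
  have sRP : [~: P, Q] \subset P by rewrite commg_subl.
  have ntR : [~: P, Q] != 1.
    by apply: contra ncQP => /eqP/commG1P; rewrite centsC.
  suff -> : P :=: [~: P, Q] by [].
  apply/eqP; rewrite eq_sym eqEcard sRP cP.
  have : #|[~: P, Q]| %| p by rewrite -cP cardSg.
  case/primeP: pr_p => _ hp /hp /orP [/eqP c1 | /eqP ->]; last by rewrite leqnn.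
  by rewrite -cardG_gt1 c1 in ntR.
split=> //.
rewrite dM; apply/eqP; rewrite eq_sym eqEsubset sG'M join_subG sPG' andbT.
exact: dergS.
Qed.
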